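(* Let $\tau>1$, let $\kappa\ge3$ be an integer and let $x^\dagger\in\mathcal X$ satisfy $\bar k^\delta_{\mathrm{pr}}(x^\dagger)\ge\kappa$. Then on the event $\Omega_\kappa$ one has $k^\delta_{\mathrm{pr}}(x^\dagger)<\infty$ and $$k^\delta_{\mathrm{dp}}\le A_\tau\,k^\delta_{\mathrm{pr}}(x^\dagger),\qquad A_\tau:=\Big(\frac{\tau+1}{\tau-1}\Big)^2;$$ in particular $k^\delta_{\mathrm{dp}}<\infty$ on $\Omega_\kappa$.
   Context: Setting: $K:\mathcal X\to\mathcal Y$ compact injective with dense range between infinite-dimensional real separable Hilbert spaces, singular system $(\sigma_j,v_j,u_j)$ ($(v_j),(u_j)$ orthonormal bases, $\sigma_1\ge\sigma_2\ge\dots>0$, $Kv_j=\sigma_ju_j$, $K^*u_j=\sigma_jv_j$); $y^\dagger=Kx^\dagger$, $\delta>0$, data $(y^\delta,u_j):=(y^\dagger,u_j)+\delta(Z,u_j)$ with real random variables $(Z,u_j)$. For $m\in\mathbb N$: $k^\delta_{\mathrm{dp}}(m):=\min\{k\in\{0,\dots,m\}:\sqrt{\sum_{j=k+1}^m(y^\delta,u_j)^2}\le\tau\sqrt m\,\delta\}$, $k^\delta_{\mathrm{dp}}:=\sup_{m\in\mathbb N}k^\delta_{\mathrm{dp}}(m)$. With $\min\emptyset=\infty$: $k^\delta_{\mathrm{pr}}(x^\dagger):=\min\{k\in\mathbb N_0:\sum_{j=1}^k(y^\delta-y^\dagger,u_j)^2\ge\sum_{j=k+1}^\infty(y^\dagger,u_j)^2\}$,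 $\bar k^\delta_{\mathrm{pr}}(x^\dagger):=\min\{k\in\mathbb N_0:\delta^2k\ge\sum_{j=k+1}^\infty(y^\dagger,u_j)^2\}$. With $\varepsilon_\tau:=\min\big(\frac{(\tau+1)^2}{4}-1,\frac13\big)$, $$\Omega_\kappa:=\Big\{\Big|\sum_{j=1}^m(y^\delta-y^\dagger,u_j)^2-m\delta^2\Big|\le\varepsilon_\tau m\delta^2\ \text{for all integers } m\ge\kappa/3\Big\}.$$ *)

(* Defs.v *)
(* Coefficient model of the singular-system setting:
   all sequences are indexed 1-based (index 0 is ignored).
   For x in X write xc j := (x, v_j); then (Kx, u_j) = sigma_j * xc j.
   z j := (Z, u_j)(omega) is one realization of the noise. *)
From HB Require Import structures.
From mathcomp Require Import all_boot all_order all_algebra.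
From mathcomp Require Import all_classical all_reals all_analysis.
Set Implicit Arguments. Unset Strict Implicit. Unset Printing Implicit Defensive.
Import Order.TTheory GRing.Theory Num.Theory.
Local Open Scope ring_scope.
Local Open Scope classical_set_scope.

Section Defs.
Context {R : realType}.

Definition ydag (sigma xc : nat -> R) (j : nat) : R := sigma j * xc j.

Definition ydelta (sigma xc : nat -> R) (delta : R) (z : nat -> R) (j : nat) : R :=
  ydag sigma xc j + delta * z j.

(* k_dp(m) = min { k in {0..m} : sqrt(sum_{j=k+1}^m y_j^2) <= tau sqrt(m) delta };
   k = m always qualifies; find over iota 0 m.+1 returns the least such k. *)
Definition kdp_m (y : nat -> R) (tau delta : R) (m : nat) : nat :=
  find (fun k => Num.sqrt (\sum_(k.+1 <= j < m.+1) y j ^+ 2)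
                 <= tau * Num.sqrt m%:R * delta) (iota 0 m.+1).

Definition kdp (y : nat -> R) (tau delta : R) : \bar R :=
  ereal_sup [set ((kdp_m y tau delta m)%:R)%:E | m in [set m : nat | (1 <= m)%N]].

Definition tail (b : nat -> R) (k : nat) : \bar R :=
  (\sum_(k.+1 <= j <oo) ((b j) ^+ 2)%:E)%E.

(* k_pr(x^dagger) = min {k : sum_{j=1}^k (y^delta - y^dagger, u_j)^2 >= tail}, min set0 = +oo *)
Definition kpr (sigma xc : nat -> R) (delta : R) (z : nat -> R) : \bar R :=
  ereal_inf [set (k%:R)%:E | k in
    [set k : nat | (tail (ydag sigma xc) k <= (\sum_(1 <= j < k.+1) (delta * z j) ^+ 2)%:E)%E]].

Definition kpr_bar (sigma xc : nat -> R) (delta : R) : \bar R :=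
  ereal_inf [set (k%:R)%:E | k in
    [set k : nat | (tail (ydag sigma xc) k <= (delta ^+ 2 * k%:R)%:E)%E]].

Definition eps_tau (tau : R) : R := Num.min ((tau + 1) ^+ 2 / 4 - 1) (3%:R^-1).

Definition Omega (tau delta : R) (kappa : nat) (z : nat -> R) : Prop :=
  forall m : nat, (kappa%:R / 3%:R : R) <= m%:R ->
    `|(\sum_(1 <= j < m.+1) (delta * z j) ^+ 2 - m%:R * delta ^+ 2 : R)|
      <= eps_tau tau * m%:R * delta ^+ 2.

Definition A_tau (tau : R) : R := ((tau + 1) / (tau - 1)) ^+ 2.

End Defs.

(* Main.v *)
Require Import Defs.
From HB Require Import structures.
From mathcomp Require Import all_boot all_order all_algebra.
From mathcomp Require Import all_classical all_reals all_analysis.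
From mathcomp Require Import zify ring lra.
Import Order.TTheory GRing.Theory Num.Theory numFieldNormedType.Exports.
Local Open Scope ring_scope.
Local Open Scope classical_set_scope.

Section Helpers.
Context {R : realType}.

Lemma kdp_m_le (y : nat -> R) tau delta m k : (k <= m)%N ->
  Num.sqrt (\sum_(k.+1 <= j < m.+1) y j ^+ 2) <= tau * Num.sqrt m%:R * delta ->
  (kdp_m y tau delta m <= k)%N.
Proof.
move=> km hk; rewrite leqNgt; apply/negP => H.
have := before_find 0%N H; rewrite nth_iota ?add0n ?ltnS //.
by rewrite hk.
Qed.

Lemma tail_mono (b : nat -> R) k k' : (k <= k')%N -> (tail b k' <= tail b k)%E.
Proof.
move=> kk; rewrite /tail (@nneseries_split _ _ k.+1 (k' - k)%N); last first.
  by move=> j _; rewrite lee_fin sqr_ge0.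
have -> : (k.+1 + (k' - k) = k'.+1)%N by lia.
apply: leeDr; apply: sume_ge0 => j _; by rewrite lee_fin sqr_ge0.
Qed.

Lemma psum_le_tail (b : nat -> R) k m :
  ((\sum_(k.+1 <= j < m) b j ^+ 2)%:E <= tail b k)%E.
Proof.
rewrite /tail -sumEFin; apply: nneseries_lim_ge => j _ _; by rewrite lee_fin sqr_ge0.
Qed.

Lemma sum_sub_le (e : nat -> R) k m : (k <= m)%N ->
  \sum_(k.+1 <= j < m.+1) e j ^+ 2 <= \sum_(1 <= j < m.+1) e j ^+ 2.
Proof.
move=> km; rewrite (@big_cat_nat _ _ _ k.+1 1 m.+1) //=.
rewrite lerDr; apply: sumr_ge0 => j _; exact: sqr_ge0.
Qed.

Lemma N_mono (e : nat -> R) k m : (k <= m)%N ->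
  \sum_(1 <= j < k.+1) e j ^+ 2 <= \sum_(1 <= j < m.+1) e j ^+ 2.
Proof.
move=> km; rewrite (@big_cat_nat _ _ _ k.+1 1 m.+1) //=.
rewrite lerDl; apply: sumr_ge0 => j _; exact: sqr_ge0.
Qed.

Lemma young (r b e : R) : 0 < r ->
  (b + e) ^+ 2 <= (1 + r^-1) * b ^+ 2 + (1 + r) * e ^+ 2.
Proof.
move=> r0; rewrite -subr_ge0.
have h : r * ((1 + r^-1) * b ^+ 2 + (1 + r) * e ^+ 2 - (b + e) ^+ 2)
   = (b - r * e) ^+ 2 by field; rewrite gt_eqF.
by rewrite -(pmulr_rge0 _ r0) h sqr_ge0.
Qed.

Lemma sigma_le1 (sigma : nat -> R) :
  (forall j, (1 <= j)%N -> sigma j.+1 <= sigma j) ->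
  forall j, (1 <= j)%N -> sigma j <= sigma 1%N.
Proof.
move=> hm; elim=> [//|j ih] _.
case: j ih => [//|j] ih.
exact: le_trans (hm j.+1 isT) (ih isT).
Qed.

Lemma nat_aux kappa ks : (3 <= kappa)%N -> (3 * ks < kappa)%N ->
  exists m, [/\ (kappa <= 3 * m)%N, (4 * m + 4 <= 3 * kappa)%N & (ks <= m)%N].
Proof.
move=> k3 h; exists ((kappa + 2) %/ 3)%N.
have := divn_eq (kappa + 2) 3; have := @ltn_pmod (kappa + 2) 3 isT.
move: ((kappa + 2) %/ 3)%N ((kappa + 2) %% 3)%N => q r h1 h2; split; lia.
Qed.

End Helpers.

Theorem mainTheorem11 (R : realType)
  (sigma : nat -> R)                 (* singular values sigma_1 >= sigma_2 >= ... > 0 *)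
  (xc : nat -> R)                    (* coefficients (x^dagger, v_j) *)
  (Omega0 : Type) (Z : Omega0 -> nat -> R)  (* (Z, u_j) as real random variables *)
  (delta tau : R) (kappa : nat) :
  (forall j, (1 <= j)%N -> 0 < sigma j) ->
  (forall j, (1 <= j)%N -> sigma j.+1 <= sigma j) ->
  sigma n @[n --> \oo] --> (0 : R) ->                           (* K compact *)
  (\sum_(1 <= j <oo) ((xc j) ^+ 2)%:E < +oo)%E ->       (* x^dagger in X *)
  0 < delta -> 1 < tau -> (3 <= kappa)%N ->
  ((kappa%:R)%:E <= kpr_bar sigma xc delta)%E ->
  forall omega : Omega0, Omega tau delta kappa (Z omega) ->
    (kpr sigma xc delta (Z omega) < +oo)%E /\
    (kdp (ydelta sigma xc delta (Z omega)) tau delta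
       <= (A_tau tau)%:E * kpr sigma xc delta (Z omega))%E /\
    (kdp (ydelta sigma xc delta (Z omega)) tau delta < +oo)%E.
Proof.
move=> spos smon _ xfin d0 t1 k3 hbar omega hO.
set z := Z omega.
set b := ydag sigma xc.
set eps := eps_tau tau.
pose Nf k := \sum_(1 <= j < k.+1) (delta * z j) ^+ 2.
have eps13 : eps <= 3%:R^-1 by rewrite /eps /eps_tau ge_min lexx orbT.
have epsT : 1 + eps <= (tau + 1) ^+ 2 / 4.
  rewrite /eps /eps_tau.
  have : Num.min ((tau + 1) ^+ 2 / 4 - 1) 3%:R^-1 <= (tau + 1) ^+ 2 / 4 - 1.
    by rewrite ge_min lexx.
  lra.
have eps0 : 0 <= eps.
  rewrite /eps /eps_tau le_min; apply/andP; split; last by [].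
  rewrite subr_ge0 ler_pdivlMr //; nra.
have OmB m : (kappa <= 3 * m)%N ->
    (1 - eps) * m%:R * delta ^+ 2 <= Nf m <= (1 + eps) * m%:R * delta ^+ 2.
  move=> km.
  have : kappa%:R / 3%:R <= m%:R :> R.
    by rewrite ler_pdivrMr // -natrM ler_nat mulnC.
  move/hO; rewrite ler_norml => /andP[h1 h2].
  rewrite /Nf /eps /z !mulrBl !mulrDl !mul1r; apply/andP; split; lra.
have hbar' k : (tail b k <= (delta ^+ 2 * k%:R)%:E)%E -> (kappa <= k)%N.
  move=> hk; have H : (kpr_bar sigma xc delta <= (k%:R)%:E)%E.
    by apply: ereal_inf_lbound; exists k.
  by have := le_trans hbar H; rewrite lee_fin ler_nat.
pose c := sigma 0%N ^+ 2 + sigma 1%N ^+ 2.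
have Sfin : (\sum_(1 <= j <oo) ((xc j) ^+ 2)%:E)%E \is a fin_num.
  rewrite ge0_fin_numE //; apply: nneseries_ge0 => j _ _; by rewrite lee_fin sqr_ge0.
set Cx := fine (\sum_(1 <= j <oo) ((xc j) ^+ 2)%:E)%E.
have tail0 : (tail b 0 <= (c * Cx)%:E)%E.
  rewrite EFinM /Cx fineK // -nneseriesZl; last by move=> j _; rewrite lee_fin sqr_ge0.
  apply: lee_nneseries => [j _ _|j _]; first by rewrite lee_fin sqr_ge0.
  rewrite lee_fin /b /ydag exprMn ler_wpM2r ?sqr_ge0 //.
  case: j => [|j]; first by rewrite /c lerDl sqr_ge0.
  have := @sigma_le1 _ sigma smon j.+1 isT.
  have := spos j.+1 isT; rewrite /c => h1 h2.
  have : sigma j.+1 ^+ 2 <= sigma 1%N ^+ 2 by nra.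
  have := sqr_ge0 (sigma 0%N); lra.
have c0 : 0 <= c * Cx.
  rewrite -lee_fin; apply: le_trans tail0; apply: nneseries_ge0 => j _ _.
  by rewrite lee_fin sqr_ge0.
pose X := (3%:R * (c * Cx)) / (2%:R * delta ^+ 2).
pose k0 := maxn kappa (Num.truncn X).+1.
have Pk0 : (tail b k0 <= (Nf k0)%:E)%E.
  apply: (le_trans (@tail_mono _ b 0%N k0 isT)); apply: (le_trans tail0).
  rewrite lee_fin.
  have /andP[h1 _] := OmB k0 (leq_trans (leq_maxl _ _) (leq_pmull k0 (isT : (0 < 3)%N))).
  apply: le_trans h1.
  have hX : X < k0%:R.
    apply: lt_le_trans (truncnS_gt X) _; by rewrite ler_nat leq_maxr.
  have d2 : 0 < delta ^+ 2 by rewrite exprn_gt0.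
  have e1 : c * Cx = X * (2%:R * delta ^+ 2) / 3%:R.
    by rewrite /X; field; rewrite gt_eqF.
  rewrite e1 ler_pdivrMr // [X in _ <= X]mulrC.
  have : 2%:R * delta ^+ 2 * X <= 2%:R * delta ^+ 2 * k0%:R.
    by rewrite ler_pM2l ?ltW // mulr_gt0.
  have : (1 - eps) * 3%:R >= 2%:R by lra.
  have : 0 <= k0%:R * delta ^+ 2 by rewrite mulr_ge0 // sqr_ge0.
  move: (k0%:R) => K; move: (delta ^+ 2) d2 => D d2; nra.
have exP : exists k, (tail b k <= (Nf k)%:E)%E by exists k0.
case: (ex_minnP exP) => ks Pks minks.
have kprE : kpr sigma xc delta z = (ks%:R)%:E.
  apply/le_anti/andP; split.
    by apply: ereal_inf_lbound; exists ks.
  by apply/ereal_infP => y [k Pk <-]; rewrite lee_fin ler_nat; exact: minks.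
have ks3 : (kappa <= 3 * ks)%N.
  rewrite leqNgt; apply/negP => hlt.
  have [m [km km2 ksm]] := @nat_aux kappa ks k3 hlt.
  have Hk : ~ (kappa <= (kappa - 1)%N)%N by clear -k3; lia.
  apply: Hk.
  apply: hbar'.
  apply: (le_trans (@tail_mono _ b ks (kappa - 1)%N _)); first by clear -hlt; lia.
  apply: (le_trans Pks); rewrite lee_fin.
  apply: (le_trans (@N_mono _ (fun j => delta * z j) ks m ksm)).
  have /andP[_ h2] := OmB m km; apply: (le_trans h2).
  have : (4 * m%:R <= 3%:R * ((kappa - 1)%N)%:R :> R).
    by rewrite -natrM -natrM ler_nat; clear -km2; lia.
  have := sqr_ge0 delta; have : 0 <= m%:R :> R by [].
  move: (m%:R) ((kappa - 1)%N)%:R (delta ^+ 2) => M K D g1 g2 g3.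
  have : 0 <= (3%:R^-1 - eps) * (M * D) by rewrite mulr_ge0 ?subr_ge0 ?mulr_ge0.
  have : 0 <= (3%:R * K - 4 * M) * D by rewrite mulr_ge0 ?subr_ge0.
  rewrite [D * K]mulrC; lra.
have t0 : 0 < tau - 1 by rewrite subr_gt0.
have t0' : 0 < tau + 1 by lra.
pose r := (tau - 1) / (tau + 1).
have r0 : 0 < r by rewrite divr_gt0.
have Ar : A_tau tau * r ^+ 2 = 1.
  rewrite /A_tau /r; field; rewrite !gt_eqF //.
have A1 : 1 <= A_tau tau.
  have q1 : 1 <= (tau + 1) / (tau - 1) by rewrite ler_pdivlMr // mul1r; lra.
  rewrite /A_tau; move: ((tau + 1) / (tau - 1)) q1 => q q1; nra.
have Ybound m : (kappa <= 3 * m)%N -> (ks <= m)%N -> ks%:R <= r ^+ 2 * m%:R ->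
    \sum_(ks.+1 <= j < m.+1) ydelta sigma xc delta z j ^+ 2
      <= (tau * delta) ^+ 2 * m%:R.
  move=> km ksm hr.
  rewrite /ydelta -/b.
  apply: (@le_trans _ _ (\sum_(ks.+1 <= j < m.+1)
     ((1 + r^-1) * b j ^+ 2 + (1 + r) * (delta * z j) ^+ 2))).
    by apply: ler_sum => j _; exact: young.
  rewrite big_split /= -!mulr_sumr.
  set Sb := \sum_(_ <= _ < _) b _ ^+ 2.
  set Se := \sum_(_ <= _ < _) (delta * z _) ^+ 2.
  have hSb : Sb <= Nf ks.
    by have := psum_le_tail b ks m.+1; move=> H; rewrite -lee_fin (le_trans H Pks).
  have hSe : Se <= Nf m := @sum_sub_le _ (fun j => delta * z j) ks m ksm.
  have /andP[_ hNk] := OmB ks ks3.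
  have /andP[_ hNm] := OmB m (leq_trans ks3 (leq_mul (leqnn 3) ksm)).
  have E0 : 0 <= 1 + eps by lra.
  have hv : (tau + 1) ^+ 2 / 4 * (1 + r) ^+ 2 = tau ^+ 2.
    rewrite /r; field; rewrite gt_eqF //.
  have hu : (1 + r^-1) * r ^+ 2 + (1 + r) = (1 + r) ^+ 2 by field; rewrite gt_eqF.
  have u0 : 0 <= 1 + r^-1 by rewrite addr_ge0 // invr_ge0 ltW.
  have v0 : 0 <= 1 + r by rewrite addr_ge0 // ltW.
  have D0 := sqr_ge0 delta.
  have M0 : 0 <= m%:R :> R by [].
  rewrite (_ : (tau * delta) ^+ 2 * m%:R = tau ^+ 2 * (m%:R * delta ^+ 2)); last by ring.
  move: (1 + r^-1) (1 + r) (1 + eps) (delta ^+ 2) (m%:R) (ks%:R) hv hu u0 v0 E0 D0 M0 hr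
    hNk hNm epsT => u v E D M K hv hu u0 v0 E0 D0 M0 hr hNk hNm epsT.
  clearbody r.
  have s1 : u * Sb <= u * (E * K * D) by rewrite ler_wpM2l // (le_trans hSb).
  have s2 : E * K * D <= E * (r ^+ 2 * M) * D.
    by rewrite ler_wpM2r // ler_wpM2l.
  have s3 : v * Se <= v * (E * M * D) by rewrite ler_wpM2l // (le_trans hSe).
  have s4 : E * v ^+ 2 <= tau ^+ 2 by rewrite -hv ler_wpM2r // sqr_ge0.
  have eq1 : u * (E * (r ^+ 2 * M) * D) + v * (E * M * D)
      = (u * r ^+ 2 + v) * (E * M * D) by ring.
  apply: (le_trans (lerD s1 s3)).
  apply: (le_trans (lerD (ler_wpM2l u0 s2) (lexx _))).
  rewrite eq1 hu.
  rewrite (_ : v ^+ 2 * (E * M * D) = (E * v ^+ 2) * (M * D)); last by ring.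
  by rewrite ler_wpM2r // mulr_ge0.
have KD : (kdp (ydelta sigma xc delta z) tau delta <= (A_tau tau * ks%:R)%:E)%E.
  apply: ge_ereal_sup => x [m m1 <-]; rewrite lee_fin.
  have sq0 : 0 <= tau * Num.sqrt m%:R * delta.
    by rewrite mulr_ge0 ?mulr_ge0 ?sqrtr_ge0 // ltW // (lt_trans ltr01 t1).
  case: (ltP (A_tau tau * ks%:R) m%:R) => hm.
    have ksA : ks%:R <= A_tau tau * ks%:R :> R by rewrite ler_peMl.
    have ksm : (ks <= m)%N by rewrite -(ler_nat R) ltW // (le_lt_trans ksA hm).
    apply: (le_trans _ ksA); rewrite ler_nat; apply: kdp_m_le => //.
    rewrite (_ : tau * Num.sqrt m%:R * delta = Num.sqrt ((tau * delta) ^+ 2 * m%:R)).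
      rewrite ler_sqrt; last by rewrite mulr_ge0 // sqr_ge0.
      apply: Ybound => //; first by apply: (leq_trans ks3); rewrite leq_mul2l ksm orbT.
      have -> : ks%:R = (A_tau tau * ks%:R) * r ^+ 2 :> R by rewrite mulrAC Ar mul1r.
      by rewrite mulrC ler_wpM2l ?sqr_ge0 // ltW.
    rewrite sqrtrM ?sqr_ge0 // sqrtr_sqr ger0_norm; first by rewrite mulrAC.
    by rewrite mulr_ge0 // ltW // ?(lt_trans ltr01 t1).
  apply: (le_trans _ hm); rewrite ler_nat; apply: kdp_m_le => //.
  by rewrite big_geq // sqrtr0.
split; first by rewrite kprE ltey.
split; first by rewrite kprE -EFinM.
exact: (le_lt_trans KD (ltey _)).
Qed.
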